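(* Let $(X_1,Y_1),\dots,(X_{n+1},Y_{n+1})$ be exchangeable random elements of $\mathcal{X}\times\mathcal{Y}$, let $f$ be a fixed model, $\mathcal{L}(f,x,y)\in[0,1]$ a known risk map, and $s:\mathcal{X}\to[0,1]$ a fixed score function (independent of the data). Write $L_i=\mathcal{L}(f,X_i,Y_i)$ for $i\in[n+1]$. For any fixed $\gamma\in(0,1)$, the random variable $E_{\gamma,n+1}$ defined below satisfies $E_{\gamma,n+1}\ge0$ and $\mathbb{E}[L_{n+1}E_{\gamma,n+1}]\le 1$.
   Context: Let $\mathcal{M}=\{s(X_i)\}_{i=1}^{n+1}$. For $t\in\mathbb{R}$ and $\ell\in[0,1]$ define $F(t;\ell)=\frac{1}{n+1}\big(\sum_{i=1}^n L_i\mathbf{1}\{s(X_i)\le t\}+\ell\,\mathbf{1}\{s(X_{n+1})\le t\}\big)$ and $t_\gamma(\ell)=\max\{t\in\mathcal{M}:F(t;\ell)\le\gamma\}$, with $\max\emptyset=-\infty$. Define $$E_{\gamma,n+1}=\inf_{\ell\in[0,1]}\frac{(n+1)\mathbf{1}\{s(X_{n+1})\le t_\gamma(\ell)\}}{\sum_{i=1}^n L_i\mathbf{1}\{s(X_i)\le t_\gamma(\ell)\}+\ell\,\mathbf{1}\{s(X_{n+1})\le t_\gamma(\ell)\}},$$ where each ratio is $0$ when its numerator is $0$ and $+\infty$ when its numerator is positive and denominator is $0$; also $E_{\gamma,n+1}=0$ if $\inf_{\ell\in[0,1]}t_\gamma(\ell)=-\infty$. *)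

(* Defs.v *)
From HB Require Import structures.
From mathcomp Require Import all_boot all_order all_algebra all_fingroup.
From mathcomp Require Import all_classical all_reals all_analysis.
Set Implicit Arguments. Unset Strict Implicit. Unset Printing Implicit Defensive.
Import Order.TTheory GRing.Theory Num.Theory.
Local Open Scope classical_set_scope.
Local Open Scope ring_scope.

(* Data are indexed by 'I_n.+1; index [ord_max] plays the role of n+1,
   the other indices play the roles of 1..n. *)

Section Evalue.
Variables (R : realType) (n : nat) (gamma : R).
Variables (sc lo : 'I_n.+1 -> R).  (* sc i = s(X_i), lo i = L_i *)

Definition last_idx : 'I_n.+1 := ord_max.

Definition Fcdf (t l : R) : R :=
  (n.+1%:R)^-1 * (\sum_(i < n.+1 | i != last_idx) lo i * (if sc i <= t then 1 else 0)
                  + l * (if sc last_idx <= t then 1 else 0)).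

(* t_gamma(l) = max { t in M : F(t;l) <= gamma }, max of empty = -oo *)
Definition tgam (l : R) : \bar R :=
  ereal_sup [set (sc i)%:E | i in [set i : 'I_n.+1 | Fcdf (sc i) l <= gamma]].

Definition Eratio (l : R) : \bar R :=
  let ind : R := if ((sc last_idx)%:E <= tgam l)%E then 1 else 0 in
  let num : R := n.+1%:R * ind in
  let den : R := \sum_(i < n.+1 | i != last_idx) lo i * (if ((sc i)%:E <= tgam l)%E then 1 else 0)
                 + l * ind in
  if num == 0 then 0%E else if den == 0 then +oo%E else (num / den)%:E.

Definition Evalue : \bar R :=
  if ereal_inf [set tgam l | l in `[0, 1]] == -oo%E then 0%E
  else ereal_inf [set Eratio l | l in `[0, 1]].
End Evalue.

(* Exchangeability of Z_1..Z_{n+1}: the joint law is invariant under any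
   permutation of indices, checked on measurable rectangles (a pi-system
   generating the product sigma-algebra). *)
Definition exchangeable (d : measure_display) (Omega : measurableType d)
  (R : realType) (P : probability Omega R)
  (dZ : measure_display) (T : measurableType dZ) (n : nat)
  (Z : 'I_n.+1 -> Omega -> T) : Prop :=
  forall (sigma : {perm 'I_n.+1}) (B : 'I_n.+1 -> set T),
    (forall i, measurable (B i)) ->
    P (\bigcap_i (Z i @^-1` B i)) = P (\bigcap_i (Z (sigma i) @^-1` B i)).

(* Main.v *)
Require Import Defs.
From HB Require Import structures.
From mathcomp Require Import all_boot all_order all_algebra all_fingroup.
From mathcomp Require Import all_classical all_reals all_analysis.
Import Order.TTheory GRing.Theory Num.Theory.
Local Open Scope classical_set_scope.
Local Open Scope ring_scope.

Module Aux.
Import measurable_realfun.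
Set Implicit Arguments. Unset Strict Implicit. Unset Printing Implicit Defensive.
Section Det.
Variables (R : realType) (n : nat) (gamma : R).
Implicit Types (a b : 'I_n.+1 -> R).

Definition Fall a b (t : R) : R := \sum_(k < n.+1) b k * (if a k <= t then 1 else 0).
Definition cnd a b (i : 'I_n.+1) : bool := (n.+1%:R)^-1 * Fall a b (a i) <= gamma.
Definition sel a b (k : 'I_n.+1) : bool := [exists i, cnd a b i && (a k <= a i)].
Definition Dn a b : R := \sum_(k < n.+1) b k * (if sel a b k then 1 else 0).
Definition gf a b (j : 'I_n.+1) : R :=
  if sel a b j && (Dn a b != 0) then n.+1%:R * b j / Dn a b else 0.

Lemma Fcdf_last a b t : Fcdf a b t (b (last_idx n)) = (n.+1%:R)^-1 * Fall a b t.
Proof.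
rewrite /Fcdf /Fall [in RHS](bigD1 (last_idx n)) //= [in RHS]addrC.
by [].
Qed.

Lemma tgam_sel a b k :
  ((a k)%:E <= tgam gamma a b (b (last_idx n)))%E = sel a b k.
Proof.
rewrite /tgam.
have -> : [set i | Fcdf a b (a i) (b (last_idx n)) <= gamma] = [set i | cnd a b i].
  by apply/seteqP; split => i /=; rewrite Fcdf_last.
apply/idP/idP; last first.
  move=> /existsP [i /andP [ci aki]].
  apply: (@le_trans _ _ (a i)%:E); first by rewrite lee_fin.
  by apply: ereal_sup_ubound; exists i.
apply: contraLR => /existsPn H.
set u := \big[Order.max/-oo%E]_(i | cnd a b i) ((a i)%:E : \bar R).
rewrite -ltNge; apply: (@le_lt_trans _ _ u).
  apply: ge_ereal_sup => _ [i /= ci <-].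
  exact: (le_bigmax_cond _ (fun i => (a i)%:E) ci).
apply: bigmax_lt; first by rewrite ltNye.
move=> i ci; rewrite lte_fin; move: (H i); rewrite ci /= -ltNge; exact.
Qed.


Lemma ind_ge0 (c : bool) : 0 <= (if c then 1 else 0 : R).
Proof. by case: c. Qed.

Lemma Eratio_ge0 a b l : (forall i, 0 <= b i) -> 0 <= l ->
  (0 <= Eratio gamma a b l)%E.
Proof.
move=> b0 l0; rewrite /Eratio /=; case: ifP => // _; case: ifP => // _.
rewrite lee_fin; apply: divr_ge0; first by apply: mulr_ge0 => //; exact: ind_ge0.
apply: addr_ge0; last by apply: mulr_ge0 => //; exact: ind_ge0.
by apply: sumr_ge0 => i _; apply: mulr_ge0 => //; exact: ind_ge0.
Qed.

Lemma Evalue_ge0 a b : (forall i, 0 <= b i) -> (0 <= Evalue gamma a b)%E.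
Proof.
move=> b0; rewrite /Evalue; case: ifP => // _.
apply: le_ereal_inf_tmp => _ [l /= l01 <-]; apply: Eratio_ge0 => //.
by move: l01; rewrite in_itv /= => /andP[].
Qed.

Lemma DnE a b : Dn a b = \sum_(i < n.+1 | i != last_idx n) b i * (if sel a b i then 1 else 0)
  + b (last_idx n) * (if sel a b (last_idx n) then 1 else 0).
Proof. by rewrite /Dn (bigD1 (last_idx n)) //= addrC. Qed.

Lemma Eratio_last a b : (forall i, 0 <= b i) ->
  ((b (last_idx n))%:E * Eratio gamma a b (b (last_idx n)) = (gf a b (last_idx n))%:E)%E.
Proof.
move=> b0; rewrite /Eratio /= tgam_sel.
under eq_bigr => i _ do rewrite tgam_sel.
rewrite -DnE /gf.
case Hs: (sel a b (last_idx n)); last by rewrite /= mulr0 eqxx mule0.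
rewrite /= mulr1 pnatr_eq0 /=.
case Dz: (Dn a b == 0) => /=.
  have : b (last_idx n) <= Dn a b.
    rewrite DnE Hs mulr1 lerDr; apply: sumr_ge0 => i _; apply: mulr_ge0 => //; exact: ind_ge0.
  move/eqP: Dz => -> bl; have -> : b (last_idx n) = 0 by apply/eqP; rewrite eq_le bl b0.
  by rewrite mul0e.
by rewrite -EFinM mulrA [b _ * _]mulrC.
Qed.

Lemma Evalue_le a b : (forall i, 0 <= b i <= 1) ->
  ((b (last_idx n))%:E * Evalue gamma a b <= (gf a b (last_idx n))%:E)%E.
Proof.
move=> b01; have b0 i : 0 <= b i by case/andP: (b01 i).
rewrite -Eratio_last //; apply: lee_wpmul2l; first by rewrite lee_fin.
rewrite /Evalue; case: ifP => _; first exact: Eratio_ge0.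
apply: ereal_inf_lbound; exists (b (last_idx n)) => //.
by rewrite /= in_itv /= b01.
Qed.

Lemma sum_gf a b : \sum_(j < n.+1) gf a b j <= n.+1%:R.
Proof.
rewrite /gf; case Dz: (Dn a b == 0).
  by under eq_bigr => j _ do rewrite andbF; rewrite big1 // ler0n.
have -> : \sum_(j < n.+1) (if sel a b j && ~~ false then n.+1%:R * b j / Dn a b else 0)
   = n.+1%:R / Dn a b * Dn a b.
  rewrite /Dn mulr_sumr; apply: eq_bigr => j _; rewrite andbT.
  by case: (sel a b j); rewrite ?mulr1 ?mulr0 // mulrAC.
by rewrite divfK ?Dz.
Qed.


Lemma gf_ge0 a b j : (forall i, 0 <= b i) -> 0 <= gf a b j.
Proof.
move=> b0; rewrite /gf; case: ifP => // /andP[_ _].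
apply: divr_ge0; first exact: mulr_ge0.
by apply: sumr_ge0 => i _; apply: mulr_ge0 => //; exact: ind_ge0.
Qed.

Section Perm.
Variable s : {perm 'I_n.+1}.
Lemma Fall_perm a b t : Fall (a \o s) (b \o s) t = Fall a b t.
Proof. by rewrite /Fall [RHS](reindex_inj (@perm_inj _ s)). Qed.
Lemma cnd_perm a b i : cnd (a \o s) (b \o s) i = cnd a b (s i).
Proof. by rewrite /cnd Fall_perm. Qed.
Lemma sel_perm a b k : sel (a \o s) (b \o s) k = sel a b (s k).
Proof.
apply/existsP/existsP => [[i H]|[i H]].
  by exists (s i); rewrite -cnd_perm.
by exists (s^-1 i)%g; rewrite cnd_perm /= permKV.
Qed.
Lemma Dn_perm a b : Dn (a \o s) (b \o s) = Dn a b.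
Proof.
rewrite /Dn [RHS](reindex_inj (@perm_inj _ s)); apply: eq_bigr => k _.
by rewrite sel_perm.
Qed.
Lemma gf_perm a b j : gf (a \o s) (b \o s) j = gf a b (s j).
Proof. by rewrite /gf sel_perm Dn_perm. Qed.
End Perm.

End Det.

Lemma measurable_inv (R : realType) : measurable_fun setT (@GRing.inv R).
Proof.
move=> _ U mU; rewrite setTI.
have -> : GRing.inv @^-1` U = ([set r : R | r != 0] `&` GRing.inv @^-1` U) `|` ([set 0] `&` GRing.inv @^-1` U).
  apply/seteqP; split => x /=.
    by case: (eqVneq x 0) => [->|x0] Ux; [right|left].
  by case=> -[].
apply: measurableU.
  apply: (measurable_realfun.open_continuous_measurable_fun (D:=[set r : R | r != 0])) => //.
    by apply/in_setP => x /= x0; exact: inv_continuous.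
  exact: measurable_realfun.open_measurable.
case: (pselect (U 0)) => U0.
  have -> : [set 0] `&` GRing.inv @^-1` U = [set 0 : R].
    by apply/seteqP; split => x /=; [case|move=> ->; rewrite invr0].
  exact: measurable_set1.
have -> : [set 0] `&` GRing.inv @^-1` U = set0.
  by apply/seteqP; split => x //= [-> /=]; rewrite invr0.
exact: measurable0.
Qed.

Section Meas.
Context d (T : measurableType d) (R : realType) (n : nat) (gamma : R).
Variables (A B : 'I_n.+1 -> T -> R).
Hypotheses (mA : forall i, measurable_fun setT (A i)) (mB : forall i, measurable_fun setT (B i)).
Local Notation a z := (fun i => A i z).
Local Notation b z := (fun i => B i z).

Lemma m_ind (c : T -> bool) : measurable_fun setT c ->
  measurable_fun setT (fun z => if c z then 1 else 0 : R).
Proof. by move=> mc; apply: measurable_fun_ifT => //; exact: measurable_cst. Qed.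

Lemma m_has (P : 'I_n.+1 -> T -> bool) (r : seq 'I_n.+1) :
  (forall i, measurable_fun setT (P i)) ->
  measurable_fun setT (fun z => has (fun i => P i z) r).
Proof.
move=> mP; elim: r => [|i r IH] /=; first exact: measurable_cst.
exact: measurable_or.
Qed.

Lemma m_exists (P : 'I_n.+1 -> T -> bool) :
  (forall i, measurable_fun setT (P i)) ->
  measurable_fun setT (fun z => [exists i, P i z]).
Proof.
move=> mP.
have -> : (fun z => [exists i, P i z]) = (fun z => has (fun i => P i z) (enum 'I_n.+1)).
  apply/funext => z; apply/existsP/hasP => [[i Hi]|[i _ Hi]]; last by exists i.
  by exists i; rewrite ?mem_enum.
exact: m_has.
Qed.

Lemma m_Fall i : measurable_fun setT (fun z => Fall (a z) (b z) (A i z)).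
Proof.
rewrite /Fall; apply: measurable_sum => k; apply: measurable_funM => //.
by apply: m_ind; exact: measurable_fun_ler.
Qed.

Lemma m_cnd i : measurable_fun setT (fun z => cnd gamma (a z) (b z) i).
Proof.
rewrite /cnd; apply: measurable_fun_ler; last exact: measurable_cst.
by apply: measurable_funM; [exact: measurable_cst|exact: m_Fall].
Qed.

Lemma m_sel k : measurable_fun setT (fun z => sel gamma (a z) (b z) k).
Proof.
rewrite /sel; apply: m_exists => i; apply: measurable_and; first exact: m_cnd.
exact: measurable_fun_ler.
Qed.

Lemma m_Dn : measurable_fun setT (fun z => Dn gamma (a z) (b z)).
Proof.
rewrite /Dn; apply: measurable_sum => k; apply: measurable_funM => //.
by apply: m_ind; exact: m_sel.
Qed.

Lemma m_gf j : measurable_fun setT (fun z => gf gamma (a z) (b z) j).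
Proof.
rewrite /gf; apply: measurable_fun_ifT; last exact: measurable_cst.
  apply: measurable_and; first exact: m_sel.
  by apply: measurable_neg; apply: measurable_fun_eqr; [exact: m_Dn|exact: measurable_cst].
apply: measurable_funM; first by apply: measurable_funM => //; exact: measurable_cst.
exact: measurableT_comp (@measurable_inv R) m_Dn.
Qed.
End Meas.


Lemma le_int_nm d (T : measurableType d) (R : realType) (mu : {measure set T -> \bar R})
  (f g : T -> \bar R) : (forall x, (0 <= f x)%E) -> (forall x, (f x <= g x)%E) ->
  (\int[mu]_x f x <= \int[mu]_x g x)%E.
Proof.
move=> f0 fg; have g0 x : (0 <= g x)%E by apply: le_trans (fg x).
rewrite !ge0_integralTE //.
apply: ge_ereal_sup => _ [h hf <-]; apply: ereal_sup_ubound; exists h => //= x.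
exact: le_trans (hf x) (fg x).
Qed.
Section Main.
Context (R : realType) d (Omega : measurableType d) (P : probability Omega R)
  dZ (T : measurableType dZ) (n : nat) (Z : 'I_n.+1 -> Omega -> T).
Hypothesis mZ : forall i, measurable_fun setT (Z i).
Hypothesis ex : exchangeable P Z.

Let G : set (set ('I_n.+1 -> T)) :=
  [set \bigcap_i ((fun z => z i) @^-1` B i) | B in [set B : 'I_n.+1 -> set T | forall i, measurable (B i)]].
Let V := g_sigma_algebraType G.

Lemma m_proj i : measurable_fun (setT : set V) (fun z : V => z i).
Proof.
move=> _ Bs mBs; rewrite setTI; apply: sub_sigma_algebra.
exists (fun k => if k == i then Bs else setT).
  by move=> k; case: ifP => _ //; exact: measurableT.
apply/seteqP; split => z /=.
  by move=> /(_ i I); rewrite eqxx.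
by move=> Hz k _; case: ifP => [/eqP -> //|].
Qed.

Definition Zs (s : {perm 'I_n.+1}) : Omega -> V := fun w i => Z (s i) w.

Lemma m_Zs s : measurable_fun setT (Zs s).
Proof.
apply: (@measurability _ _ Omega V setT (Zs s) G) => //.
move=> _ [_ [Bs mB <-] <-]; rewrite setTI preimage_bigcap.
apply: fin_bigcap_measurable; first exact: finite_finset.
move=> i _; have := mZ (s i) measurableT (mB i); rewrite setTI; exact.
Qed.

Lemma G_setI : setI_closed G.
Proof.
move=> _ _ [B1 mB1 <-] [B2 mB2 <-].
exists (fun i => B1 i `&` B2 i); first by move=> i; exact: measurableI.
apply/seteqP; split => z /=.
  by move=> H; split => i _; have [] := H i I.
by move=> [H1 H2] i _; split; [exact: H1|exact: H2].
Qed.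

Lemma Zs_rect s (B : 'I_n.+1 -> set T) :
  Zs s @^-1` (\bigcap_i ((fun z => z i) @^-1` B i)) = \bigcap_i (Z (s i) @^-1` B i).
Proof. by rewrite preimage_bigcap. Qed.

Lemma push_eq s (A : set V) : measurable A -> pushforward P (Zs s) A = pushforward P (Zs 1%g) A.
Proof.
move=> mA.
have m1 := m_Zs s.
have m2 := m_Zs 1%g.
pose mu1 : {measure set V -> \bar R} := pushforward P (Zs s).
pose mu2 : {measure set V -> \bar R} := pushforward P (Zs 1%g).
change (mu1 m1 A = mu2 m2 A).
apply: (@measure_unique _ R V (G : set (set V)) (fun _ => setT) erefl _ _ _ (mu1 m1) (mu2 m2)) => //.
- exact: G_setI.
- move=> _; exists (fun _ => setT); first by move=> i; exact: measurableT.
  by apply/seteqP; split => z //= _ i _.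
- by apply/seteqP; split => z //= _; exists 0%N.
- move=> _ [B mB <-]; rewrite /mu1 /mu2 /pushforward /=.
  change (P (Zs s @^-1` (\bigcap_i ((fun z : V => z i) @^-1` B i))) = P (Zs 1%g @^-1` (\bigcap_i ((fun z : V => z i) @^-1` B i)))).
  rewrite !Zs_rect.
  rewrite -ex //.
  by congr (P _); apply/seteqP; split => w /= H i _; have := H i I; rewrite perm1.
- move=> _; change (P (Zs s @^-1` setT) < +oo)%E; rewrite preimage_setT probability_setT; exact: ltry.
Qed.

Lemma int_eq s (h : V -> \bar R) : measurable_fun setT h -> (forall z, (0 <= h z)%E) ->
  (\int[P]_w h (Zs s w) = \int[P]_w h (Zs 1%g w))%E.
Proof.
move=> mh h0.
have e1 := ge0_integral_pushforward (m_Zs s) P measurableT mh (fun y _ => h0 y).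
have e2 := ge0_integral_pushforward (m_Zs 1%g) P measurableT mh (fun y _ => h0 y).
rewrite preimage_setT in e1 e2.
transitivity (\int[P]_(x in setT) (h \o Zs s) x)%E; first by [].
rewrite -e1.
transitivity (\int[P]_(x in setT) (h \o Zs 1%g) x)%E; last by [].
rewrite -e2.
apply: eq_measure_integral; try exact: m_Zs.
move=> *; exact: push_eq.
Qed.

Lemma main_bound (gamma : R) (Lf sf : T -> R) :
  measurable_fun setT Lf -> measurable_fun setT sf ->
  (forall t, 0 <= Lf t <= 1) ->
  (\int[P]_w ((Lf (Z ord_max w))%:E *
     Evalue gamma (fun i => sf (Z i w)) (fun i => Lf (Z i w))) <= 1)%E.
Proof.
move=> mLf msf Lf01.
have Lf0 t : 0 <= Lf t by case/andP: (Lf01 t).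
pose hA i (z : V) := sf (z i).
pose hB i (z : V) := Lf (z i).
have mhA i : measurable_fun setT (hA i) := measurableT_comp msf (m_proj i).
have mhB i : measurable_fun setT (hB i) := measurableT_comp mLf (m_proj i).
pose g j (z : V) := gf gamma (fun i => hA i z) (fun i => hB i z) j.
have mg j : measurable_fun setT (g j) := m_gf gamma mhA mhB j.
have g0 j z : 0 <= g j z by apply: gf_ge0 => i; exact: Lf0.
have Z1 w : Zs 1%g w = (fun i => Z i w) by apply/funext => i; rewrite /Zs perm1.
have gZ j w : g j (Zs 1%g w) = gf gamma (fun i => sf (Z i w)) (fun i => Lf (Z i w)) j.
  by rewrite /g /hA /hB Z1.
apply: (@le_trans _ _ (\int[P]_w (g ord_max (Zs 1%g w))%:E)%E).
  apply: le_int_nm.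
- move=> w; apply: mule_ge0; first by rewrite lee_fin.
  by apply: Evalue_ge0 => i.
- by move=> w; rewrite gZ; apply: (Evalue_le (n := n)) => i.
set I := (\int[P]_w (g ord_max (Zs 1%g w))%:E)%E.
have Ij j : (\int[P]_w (g j (Zs 1%g w))%:E)%E = I.
  pose sg := tperm ord_max j.
  have -> : (fun w => (g j (Zs 1%g w))%:E) = (fun w => (g ord_max (Zs sg w))%:E).
    apply/funext => w; congr (_%:E).
    have eA : (fun i => hA i (Zs sg w)) = (fun i => hA i (Zs 1%g w)) \o sg.
      by apply/funext => i; rewrite /hA /Zs /= perm1.
    have eB : (fun i => hB i (Zs sg w)) = (fun i => hB i (Zs 1%g w)) \o sg.
      by apply/funext => i; rewrite /hB /Zs /= perm1.
    by rewrite /g eA eB gf_perm tpermL.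
  apply: (int_eq sg (h := fun z => (g ord_max z)%:E)).
    exact/measurable_EFinP.
  by move=> z; rewrite lee_fin.
have I0 : (0 <= I)%E by apply: integral_ge0 => w _; rewrite lee_fin.
have : (n.+1%:R%:E * I <= n.+1%:R%:E)%E.
  have -> : (n.+1%:R%:E * I = \sum_(j < n.+1) I)%E by rewrite sumr_const card_ord mule_natl.
  under eq_bigr => j _ do rewrite -(Ij j).
  rewrite -ge0_integral_sum //; last 2 first.
  - move=> j; apply/measurable_EFinP; exact: measurableT_comp (mg j) (m_Zs 1%g).
  - by move=> j w _; rewrite lee_fin.
  apply: (@le_trans _ _ (\int[P]_w (cst (n.+1%:R)%:E w))%E).
    apply: le_int_nm.
  - by move=> w; apply: sume_ge0 => j _; rewrite lee_fin.
  - move=> w /=; rewrite sumEFin lee_fin.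
    have := sum_gf gamma (fun i => hA i (Zs 1%g w)) (fun i => hB i (Zs 1%g w)).
    by [].
  rewrite integral_cst //.
  rewrite -[leRHS]mule1; apply: lee_wpmul2l => //; exact: probability_le1.
by rewrite -[X in (_ <= X)%E]mule1 lee_pmul2l // ?lte_fin ?ltr0n.
Qed.
End Main.

End Aux.
Import Aux.
Unset Implicit Arguments. Set Strict Implicit.

Theorem theorem4p1
  (R : realType) (d : measure_display) (Omega : measurableType d)
  (P : probability Omega R)
  (dx dy : measure_display) (X : measurableType dx) (Y : measurableType dy)
  (n : nat) (Z : 'I_n.+1 -> Omega -> X * Y)
  (Model : Type) (f : Model) (Loss : Model -> X -> Y -> R) (s : X -> R)
  (gamma : R) :
  (forall i, measurable_fun setT (Z i)) ->
  exchangeable P Z ->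
  (forall x y, 0 <= Loss f x y <= 1) ->
  measurable_fun setT (fun z : X * Y => Loss f z.1 z.2) ->
  (forall x, 0 <= s x <= 1) ->
  measurable_fun setT s ->
  0 < gamma < 1 ->
  let E := fun w => Evalue gamma (fun i => s (Z i w).1)
                                 (fun i => Loss f (Z i w).1 (Z i w).2) in
  (forall w, (0 <= E w)%E) /\
  (\int[P]_w ((Loss f (Z ord_max w).1 (Z ord_max w).2)%:E * E w) <= 1)%E.
Proof.
move=> mZ ex L01 mL s01 ms g01 E; split.
  move=> w; apply: Evalue_ge0 => i; by case/andP: (L01 (Z i w).1 (Z i w).2).
have ms1 : measurable_fun setT (fun z : X * Y => s z.1).
  exact: measurableT_comp ms measurable_fst.
exact: (@main_bound R d Omega P _ (X * Y)%type n Z mZ ex gamma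
  (fun z => Loss f z.1 z.2) (fun z => s z.1) mL ms1 (fun t => L01 _ _)).
Qed.
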